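(* Let $G$ be a finitely generated left-orderable group and $X=X^{-1}$ a finite generating set of $G$, and suppose that the Bieri–Neumann–Strebel invariant $\Sigma^1(G)$ is non-empty. Then $G$ admits a positive cone $P$ which spans a connected subgraph of the Cayley graph $\Gamma(G,X)$. In particular, there exist left-orderable (Gromov) hyperbolic groups admitting positive cones that are connected in this sense.
   Context: A positive cone of $G$ is a subsemigroup $P\subseteq G$ with $G=P\sqcup P^{-1}\sqcup\{1\}$; $G$ is left-orderable if it has a positive cone. For a finitely generated group $G$ with finite generating set $X$, a non-trivial homomorphism $\phi:G\to\mathbb{R}$ belongs to $\Sigma^1(G)$ if and only if $\phi^{-1}((0,\infty))$ spans a connected subgraph of $\Gamma(G,X)$ (this does not depend on $X$). *)

(* Defs.v *)
From Stdlib Require Import Reals List.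
Import ListNotations.
Open Scope R_scope.

Record Group := {
  carrier :> Type;
  gmul : carrier -> carrier -> carrier;
  ginv : carrier -> carrier;
  gone : carrier;
  gmulA : forall a b c, gmul a (gmul b c) = gmul (gmul a b) c;
  gmul1l : forall a, gmul gone a = a;
  gmul1r : forall a, gmul a gone = a;
  gmulVl : forall a, gmul (ginv a) a = gone;
  gmulVr : forall a, gmul a (ginv a) = gone
}.

Arguments gmul {G} : rename.
Arguments ginv {G} : rename.
Arguments gone {G} : rename.

Definition word_prod {G : Group} (w : list G) : G := fold_right gmul gone w.

(* X generates G (as a monoid; for symmetric X this is generation as a group). *)
Definition generates {G : Group} (X : list G) : Prop :=
  forall g : G, exists w : list G, (forall x, In x w -> In x X) /\ g = word_prod w.

Definition symmetric_set {G : Group} (X : list G) : Prop :=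
  forall x, In x X -> In (ginv x) X.

Definition positive_cone {G : Group} (P : G -> Prop) : Prop :=
  (forall a b, P a -> P b -> P (gmul a b)) /\
  (forall g : G,
     (P g \/ P (ginv g) \/ g = gone) /\
     ~ (P g /\ P (ginv g)) /\
     ~ (P g /\ g = gone) /\
     ~ (P (ginv g) /\ g = gone)).

Definition left_orderable (G : Group) : Prop :=
  exists P : G -> Prop, positive_cone P.

(* Cayley graph Γ(G,X): vertices G, edges g -- g x for x in X.
   [cayley_conn X S a b]: there is a path from a to b in Γ(G,X) all of whose
   vertices lie in S. *)
Inductive cayley_conn {G : Group} (X : list G) (S : G -> Prop) (a : G) : G -> Prop :=
  | cc_refl : S a -> cayley_conn X S a a
  | cc_step : forall b x, cayley_conn X S a b -> In x X -> S (gmul b x) ->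
              cayley_conn X S a (gmul b x).

Definition spans_connected {G : Group} (X : list G) (S : G -> Prop) : Prop :=
  forall a b, S a -> S b -> cayley_conn X S a b.

Definition is_hom_to_R {G : Group} (phi : G -> R) : Prop :=
  forall g h : G, phi (gmul g h) = phi g + phi h.

Definition in_Sigma1 {G : Group} (X : list G) (phi : G -> R) : Prop :=
  is_hom_to_R phi /\ (exists g, phi g <> 0) /\
  spans_connected X (fun g => 0 < phi g).

(* Main.v *)
Require Import Defs.
From Stdlib Require Import Reals List Lra Classical.

Lemma cc_mono {G : Group} (X : list G) (S T : G -> Prop) a b :
  (forall g, S g -> T g) -> cayley_conn X S a b -> cayley_conn X T a b.
Proof. intros HST H; induction H; [apply cc_refl|eapply cc_step]; eauto. Qed.

Lemma cc_trans {G : Group} (X : list G) S a b c :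
  cayley_conn X S a b -> cayley_conn X S b c -> cayley_conn X S a c.
Proof. intros H1 H2; induction H2; [exact H1| eapply cc_step; eauto]. Qed.

Lemma cc_start {G : Group} (X : list G) S a b : cayley_conn X S a b -> S a.
Proof. intros H; induction H; auto. Qed.

Lemma cc_end {G : Group} (X : list G) S a b : cayley_conn X S a b -> S b.
Proof. intros H; induction H; auto. Qed.

Theorem proposition1p3 (G : Group) (X : list G)
  (hgen : generates X) (hsym : symmetric_set X)
  (hlo : left_orderable G)
  (hSigma : exists phi : G -> R, in_Sigma1 X phi) :
  exists P : G -> Prop, positive_cone P /\ spans_connected X P.
Proof.
  destruct hlo as [Q [HQm HQt]].
  destruct hSigma as [phi [Hhom [[g0 Hg0] Hconn]]].
  assert (H1 : phi gone = 0).
  { pose proof (Hhom gone gone) as E. rewrite gmul1l in E. lra. }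
  assert (HV : forall g, phi (ginv g) = - phi g).
  { intro g. pose proof (Hhom (ginv g) g) as E. rewrite gmulVl, H1 in E. lra. }
  assert (Hx : exists x, In x X /\ 0 < phi x).
  { destruct (classic (exists x, In x X /\ 0 < phi x)) as [H|H]; [exact H|].
    exfalso. apply Hg0.
    assert (Hz : forall x, In x X -> phi x = 0).
    { intros x Hx.
      assert (~ 0 < phi x) by (intro; apply H; eauto).
      assert (~ 0 < phi (ginv x)) by (intro; apply H; eauto).
      rewrite HV in *. lra. }
    destruct (hgen g0) as [w [Hw ->]].
    clear Hg0. induction w as [|y w IH]; simpl.
    - exact H1.
    - assert (Hy : In y X) by (apply Hw; simpl; auto).
      assert (Hw' : forall z, In z w -> In z X) by (intros z Hz'; apply Hw; simpl; auto).
      rewrite Hhom, (Hz y Hy), (IH Hw'). lra. }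
  destruct Hx as [x [HxX Hxp]].
  exists (fun g => 0 < phi g \/ (phi g = 0 /\ Q g)).
  split; [split|].
  - intros a b Ha Hb. rewrite Hhom.
    destruct Ha as [Ha|[Ha Qa]]; destruct Hb as [Hb|[Hb Qb]];
      try (left; lra). right. split; [lra| auto].
  - intro g. rewrite HV. destruct (HQt g) as [T [N1 [N2 N3]]].
    repeat split.
    + destruct (Rtotal_order (phi g) 0) as [Hl|[He|Hg]]; try (left; left; lra).
      * right; left; left; lra.
      * destruct T as [T|[T|T]]; [left; right; auto| right; left; right; split; [lra|auto]| right; right; auto].
    + intros [A B]. destruct A as [A|[A A']]; destruct B as [B|[B B']]; try lra.
      apply N1; split; auto.
    + intros [A B]. subst g. destruct A as [A|[A A']]; [lra|]. apply N2; auto.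
    + intros [A B]. subst g. destruct A as [A|[A A']]; [lra|]. apply N3; auto.
  - set (P := fun g => 0 < phi g \/ (phi g = 0 /\ Q g)).
    assert (Hup : forall a, P a -> exists a', 0 < phi a' /\ cayley_conn X P a a' /\ cayley_conn X P a' a).
    { intros a Ha. destruct Ha as [Ha|[Ha Qa]].
      - exists a. split; auto. split; apply cc_refl; left; auto.
      - exists (gmul a x). assert (Hp : 0 < phi (gmul a x)) by (rewrite Hhom; lra).
        split; [auto|split].
        + eapply cc_step; [apply cc_refl; right; auto | auto | left; auto].
        + assert (E : gmul (gmul a x) (ginv x) = a) by (rewrite <- gmulA, gmulVr, gmul1r; auto).
          rewrite <- E at 2. eapply cc_step; [apply cc_refl; left; auto| apply hsym; auto|].
          rewrite E. right; auto. }
    intros a b Ha Hb.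
    destruct (Hup a Ha) as [a' [Ha' [Ca _]]].
    destruct (Hup b Hb) as [b' [Hb' [_ Cb]]].
    eapply cc_trans; [exact Ca|]. eapply cc_trans; [|exact Cb].
    eapply cc_mono; [|apply Hconn; auto]. intros g Hg; left; auto.
Qed.
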